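(* Let $F$ be a field of characteristic not $2$. Then every PC-map $\mathrm{UT}(3,F)\to\mathrm{UT}(3,F)$ is a composition of a permutable PC-map, a field automorphism, and a central PC-map.
   Context: $\mathrm{UT}(3,F)$ is the group of upper unitriangular $3\times3$ matrices over $F$; $a_{ij}$ denotes the $(i,j)$ entry, $e_{ij}$ the matrix unit, $t_{ij}(\alpha)=e+\alpha e_{ij}$. $[x,y]=xyx^{-1}y^{-1}$. A PC-map is a bijection $\varphi$ of the group with $\varphi([x,y])=[\varphi(x),\varphi(y)]$ for all $x,y$. A permutable PC-map is a map of the form $a\mapsto\begin{pmatrix}1&\alpha a_{12}+\beta a_{23}&(\alpha\delta-\beta\gamma)a_{13}\\0&1&\gamma a_{12}+\delta a_{23}\\0&0&1\end{pmatrix}$ with fixed $\alpha,\beta,\gamma,\delta\in F$, $\alpha\delta-\beta\gamma\ne0$. A field automorphism of $\mathrm{UT}(3,F)$ is the map $(a_{ij})\mapsto(\theta(a_{ij}))$ for a field automorphism $\theta$ of $F$. A central PC-map is a PC-map of the form $a\mapsto a\,t_{13}(f(a))$ for some function $f:\mathrm{UT}(3,F)\to F$. *)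

(* Defs.v *)
From HB Require Import structures.
From mathcomp Require Import all_boot all_order all_algebra.
Set Implicit Arguments. Unset Strict Implicit. Unset Printing Implicit Defensive.
Import GRing.Theory.
Local Open Scope ring_scope.

Section UT3.
Variable F : fieldType.

Definition UT3 (a : 'M[F]_3) : Prop :=
  forall i j : 'I_3, (i == j -> a i j = 1) /\ ((j < i)%N -> a i j = 0).

(* the unitriangular matrix with entries a12 = x, a23 = y, a13 = z *)
Definition ut3 (x y z : F) : 'M[F]_3 :=
  \matrix_(i < 3, j < 3)
    if i == j then 1
    else if ((i == 0%N :> nat) && (j == 1%N :> nat)) then x
    else if ((i == 1%N :> nat) && (j == 2%N :> nat)) then y
    else if ((i == 0%N :> nat) && (j == 2%N :> nat)) then z
    else 0.

Definition i0 : 'I_3 := @Ordinal 3 0 isT.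
Definition i1 : 'I_3 := @Ordinal 3 1 isT.
Definition i2 : 'I_3 := @Ordinal 3 2 isT.

(* entries a_12, a_13, a_23 (1-based, as in the paper) *)
Definition a12 (a : 'M[F]_3) : F := a i0 i1.
Definition a13 (a : 'M[F]_3) : F := a i0 i2.
Definition a23 (a : 'M[F]_3) : F := a i1 i2.

Definition t13 (c : F) : 'M[F]_3 := ut3 0 0 c.

Definition comm3 (x y : 'M[F]_3) : 'M[F]_3 := x * y * x^-1 * y^-1.

(* PC-map: bijection of UT(3,F) preserving commutators.  The map is given as a
   function on all 3x3 matrices; only its restriction to UT(3,F) matters. *)
Definition PCmap (phi : 'M[F]_3 -> 'M[F]_3) : Prop :=
  [/\ (forall x, UT3 x -> UT3 (phi x)),
      (forall x y, UT3 x -> UT3 y -> phi x = phi y -> x = y),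
      (forall y, UT3 y -> exists x, UT3 x /\ phi x = y) &
      (forall x y, UT3 x -> UT3 y -> phi (comm3 x y) = comm3 (phi x) (phi y))].

Definition permutable_map (al be ga de : F) (a : 'M[F]_3) : 'M[F]_3 :=
  ut3 (al * a12 a + be * a23 a) (ga * a12 a + de * a23 a)
      ((al * de - be * ga) * a13 a).

Definition field_aut_map (theta : {rmorphism F -> F}) (a : 'M[F]_3) : 'M[F]_3 :=
  map_mx theta a.

Definition central_map (f : 'M[F]_3 -> F) (a : 'M[F]_3) : 'M[F]_3 :=
  a * t13 (f a).

End UT3.

(* Main.v *)
Require Import Defs.
From HB Require Import structures.
From mathcomp Require Import all_boot all_order all_algebra ring.
Import GRing.Theory.
Local Open Scope ring_scope.
Set Implicit Arguments. Unset Strict Implicit. Unset Printing Implicit Defensive.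

Section MkRM.
Variable F : fieldType.
Variable f : F -> F.
Hypothesis fB : forall a b, f (a - b) = f a - f b.
Hypothesis fM : forall a b, f (a * b) = f a * f b.
Hypothesis f1 : f 1 = 1.
Definition fT := f.
Lemma fT_z : zmod_morphism fT. Proof. by move=> a b; apply: fB. Qed.
HB.instance Definition _ := GRing.isZmodMorphism.Build F F fT fT_z.
Lemma fT_m : monoid_morphism fT. Proof. by split=> //. Qed.
HB.instance Definition _ := GRing.isMonoidMorphism.Build F F fT fT_m.
Definition mkRM : {rmorphism F -> F} := fT.
Lemma mkRME x : mkRM x = f x. Proof. by []. Qed.
End MkRM.

Section M.
Variable F : fieldType.
Lemma ut3_mul (x y z x' y' z' : F) :
  ut3 x y z * ut3 x' y' z' = ut3 (x + x') (y + y') (z + z' + x * y').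
Proof.
apply/matrixP => i j; rewrite !mxE !big_ord_recr big_ord0 /= !mxE.
case: i => [[|[|[|i]]] Hi] //; case: j => [[|[|[|j]]] Hj] //=; ring.
Qed.

Lemma ut3_inv (x y z : F) : (ut3 x y z)^-1 = ut3 (-x) (-y) (x * y - z).
Proof.
have E1 : ut3 x y z * ut3 (-x) (-y) (x * y - z) = 1.
  rewrite ut3_mul; apply/matrixP => i j; rewrite !mxE.
  case: i => [[|[|[|i]]] Hi] //; case: j => [[|[|[|j]]] Hj] //=; ring.
have E2 : ut3 (-x) (-y) (x * y - z) * ut3 x y z = 1.
  rewrite ut3_mul; apply/matrixP => i j; rewrite !mxE.
  case: i => [[|[|[|i]]] Hi] //; case: j => [[|[|[|j]]] Hj] //=; ring.
have U : ut3 x y z \is a GRing.unit by apply/GRing.unitrP; exists (ut3 (-x) (-y) (x * y - z)).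
by rewrite -[RHS](mulKr U) E1 mulr1.
Qed.
Lemma ut3_comm (x y z x' y' z' : F) :
  comm3 (ut3 x y z) (ut3 x' y' z') = ut3 0 0 (x * y' - x' * y).
Proof. rewrite /comm3 !ut3_inv !ut3_mul; congr ut3; ring. Qed.
Lemma ut3_UT (x y z : F) : UT3 (ut3 x y z).
Proof. move=> i j; rewrite !mxE.
case: i => [[|[|[|i]]] Hi] //; case: j => [[|[|[|j]]] Hj] //=.
Qed.
Lemma UT_ut3 (a : 'M[F]_3) : UT3 a -> a = ut3 (a12 a) (a23 a) (a13 a).
Proof. move=> H; apply/matrixP => i j; rewrite !mxE.
have [H1 H2] := H i j.
case: i H1 H2 => [[|[|[|i]]] Hi] //; case: j => [[|[|[|j]]] Hj] //= H1 H2;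
  first [ by rewrite H1 | by rewrite H2 | rewrite /a12 /a13 /a23; congr (a _ _); exact: val_inj ].
Qed.
Lemma ut3_a12 (x y z : F) : a12 (ut3 x y z) = x. Proof. by rewrite /a12 mxE. Qed.
Lemma ut3_a23 (x y z : F) : a23 (ut3 x y z) = y. Proof. by rewrite /a23 mxE. Qed.
Lemma ut3_a13 (x y z : F) : a13 (ut3 x y z) = z. Proof. by rewrite /a13 mxE. Qed.
Lemma ut3_inj (x y z x' y' z' : F) : ut3 x y z = ut3 x' y' z' -> [/\ x = x', y = y' & z = z'].
Proof. move=> E; split.
- by rewrite -(ut3_a12 x y z) E ut3_a12.
- by rewrite -(ut3_a23 x y z) E ut3_a23.
- by rewrite -(ut3_a13 x y z) E ut3_a13.
Qed.
Lemma ut3_t13 (x y z c : F) : ut3 x y z * t13 c = ut3 x y (z + c).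
Proof. rewrite /t13 ut3_mul; congr ut3; ring. Qed.
Lemma ut3_map (th : {rmorphism F -> F}) (x y z : F) :
  map_mx th (ut3 x y z) = ut3 (th x) (th y) (th z).
Proof. apply/matrixP => i j; rewrite !mxE.
case: i => [[|[|[|i]]] Hi] //; case: j => [[|[|[|j]]] Hj] //=; by rewrite ?rmorph0 ?rmorph1.
Qed.
End M.

Section Main.
Variable F : fieldType.
Hypothesis hchar : (2%:R : F) != 0.
Variable phi : 'M[F]_3 -> 'M[F]_3.
Hypothesis hphi : PCmap phi.

Lemma phiUT a : UT3 a -> UT3 (phi a). Proof. by case: hphi => H _ _ _; apply: H. Qed.
Lemma phiinj a b : UT3 a -> UT3 b -> phi a = phi b -> a = b.
Proof. by case: hphi => _ H _ _; apply: H. Qed.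
Lemma phisurj y : UT3 y -> exists x, UT3 x /\ phi x = y.
Proof. by case: hphi => _ _ H _; apply: H. Qed.
Lemma phicomm a b : UT3 a -> UT3 b -> phi (comm3 a b) = comm3 (phi a) (phi b).
Proof. by case: hphi => _ _ _ H; apply: H. Qed.

Definition om (a b : 'M[F]_3) := a12 a * a23 b - a12 b * a23 a.

Lemma comm_gen a b : UT3 a -> UT3 b -> comm3 a b = ut3 0 0 (om a b).
Proof.
move=> Ha Hb; have := ut3_comm (a12 a) (a23 a) (a13 a) (a12 b) (a23 b) (a13 b).
by rewrite -(UT_ut3 Ha) -(UT_ut3 Hb).
Qed.

Lemma keyC a b : UT3 a -> UT3 b -> phi (ut3 0 0 (om a b)) = ut3 0 0 (om (phi a) (phi b)).
Proof.
move=> Ha Hb; rewrite -comm_gen // phicomm // comm_gen //; exact: phiUT.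
Qed.

Definition g c := a13 (phi (ut3 0 0 c)).

Lemma om_ut3 x y z x' y' z' : om (ut3 x y z) (ut3 x' y' z') = x * y' - x' * y.
Proof. by rewrite /om !ut3_a12 !ut3_a23. Qed.

Lemma phiC c : phi (ut3 0 0 c) = ut3 0 0 (g c).
Proof.
rewrite /g; have E2 := keyC (ut3_UT c 0 0) (ut3_UT 0 1 0); rewrite om_ut3 mulr1 mul0r subr0 in E2.
by rewrite E2 ut3_a13.
Qed.

Lemma gom a b : UT3 a -> UT3 b -> g (om a b) = om (phi a) (phi b).
Proof. by move=> Ha Hb; rewrite /g keyC // ut3_a13. Qed.

Lemma indep a a' : UT3 a -> UT3 a' -> a12 a = a12 a' -> a23 a = a23 a' ->
  a12 (phi a) = a12 (phi a') /\ a23 (phi a) = a23 (phi a').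
Proof.
move=> Ha Ha' E1 E2.
have H w : UT3 w -> om (phi a) (phi w) = om (phi a') (phi w).
  by move=> Hw; rewrite -!gom // /om E1 E2.
have [w1 [Hw1 E3]] := phisurj (ut3_UT 1 0 0).
have [w2 [Hw2 E4]] := phisurj (ut3_UT 0 1 0).
have := H _ Hw1; have := H _ Hw2; rewrite /om E3 E4 !ut3_a12 !ut3_a23 => A B.
split.
- by move: A; rewrite !mulr1 !mul0r !subr0.
- by move: B; rewrite !mulr0 !mul1r !sub0r => /oppr_inj.
Qed.

Definition X x y := a12 (phi (ut3 x y 0)).
Definition Y x y := a23 (phi (ut3 x y 0)).

Lemma phiform a : UT3 a -> phi a = ut3 (X (a12 a) (a23 a)) (Y (a12 a) (a23 a)) (a13 (phi a)).
Proof.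
move=> Ha; have [E1 E2] := indep Ha (ut3_UT (a12 a) (a23 a) 0) (esym (ut3_a12 _ _ _)) (esym (ut3_a23 _ _ _)).
by rewrite /X /Y -E1 -E2 -UT_ut3 //; apply: phiUT.
Qed.

Lemma G x y x' y' c : c = x * y' - x' * y -> g c = X x y * Y x' y' - X x' y' * Y x y.
Proof.
move=> ->; rewrite -(om_ut3 x y 0 x' y' 0) gom //; exact: ut3_UT.
Qed.

Lemma g0 : g 0 = 0.
Proof. rewrite (@G 0 0 0 0 0); last by ring. ring. Qed.

Lemma ginj c c' : g c = g c' -> c = c'.
Proof.
move=> E; have := @phiinj (ut3 0 0 c) (ut3 0 0 c') (ut3_UT _ _ _) (ut3_UT _ _ _).
by rewrite !phiC E => /(_ erefl) /ut3_inj [].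
Qed.

Definition d := g 1.
Definition al := X 1 0.
Definition ga := Y 1 0.
Definition be := X 0 1.
Definition de := Y 0 1.

Lemma dneq0 : d != 0.
Proof. apply/eqP => E; have : (1 : F) = 0 by apply: ginj; rewrite g0. by move/eqP; rewrite oner_eq0. Qed.

Lemma dE : d = al * de - be * ga.
Proof. rewrite /d (@G 1 0 0 1 1) //; ring. Qed.

Lemma gx x y : g x = X x y * de - be * Y x y.
Proof. rewrite (@G x y 0 1 x) //; ring. Qed.
Lemma gy x y : g y = al * Y x y - X x y * ga.
Proof. rewrite (@G 1 0 x y y) //; ring. Qed.

Definition th c := g c / d.

Lemma dneq0' : al * de - be * ga != 0. Proof. by rewrite -dE dneq0. Qed.

Lemma XE x y : X x y = al * th x + be * th y.
Proof. rewrite /th (gx x y) (gy x y) dE; field; exact: dneq0'. Qed.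
Lemma YE x y : Y x y = ga * th x + de * th y.
Proof. rewrite /th (gx x y) (gy x y) dE; field; exact: dneq0'. Qed.

Lemma thG x y x' y' c : c = x * y' - x' * y -> th c = th x * th y' - th x' * th y.
Proof.
move=> Ec; rewrite {1}/th (G Ec) !XE !YE; rewrite {1}dE; field; exact: dneq0'.
Qed.

Lemma th0 : th 0 = 0. Proof. by rewrite /th g0 mul0r. Qed.
Lemma th1 : th 1 = 1. Proof. by rewrite /th -/d divff // dneq0. Qed.
Lemma thinj a b : th a = th b -> a = b.
Proof.
move=> E; apply: ginj; have : th a * d = th b * d by rewrite E.
by rewrite /th !divfK // dneq0.
Qed.
Lemma thM a b : th (a * b) = th a * th b.
Proof. rewrite (thG (x:=a) (y:=1) (x':=0) (y':=b)) ?th0 ?th1; ring. Qed.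
Lemma thm1 : th (-1) = -1.
Proof.
have E : th 1 = th (-1) * th (-1) - th 0 * th 1 by apply: thG; ring.
rewrite th1 th0 in E.
rewrite mul0r subr0 in E.
have : (th (-1) - 1) * (th (-1) + 1) = 0.
  have -> : (th (-1) - 1) * (th (-1) + 1) = th (-1) * th (-1) - 1 by ring.
  by rewrite -E subrr.
move/eqP; rewrite mulf_eq0 => /orP [|].
- rewrite subr_eq0 => /eqP E1; exfalso; move: hchar.
  have : (-1 : F) = 1 by apply: thinj; rewrite E1 th1.
  move=> E2; rewrite (_ : 2%:R = (1 : F) - (-1)); last by ring.
  by rewrite E2 subrr eqxx.
- by rewrite addr_eq0 => /eqP.
Qed.
Lemma thB a b : th (a - b) = th a - th b.
Proof. rewrite (thG (x:=a) (y:=1) (x':=b) (y':=1)) ?th1; ring. Qed.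

Lemma lin0 u v : al * u + be * v = 0 -> ga * u + de * v = 0 -> u = 0 /\ v = 0.
Proof.
move=> e1 e2.
have Hu : (al * de - be * ga) * u = de * (al * u + be * v) - be * (ga * u + de * v) by ring.
have Hv : (al * de - be * ga) * v = al * (ga * u + de * v) - ga * (al * u + be * v) by ring.
rewrite e1 e2 !mulr0 subr0 in Hu Hv.
move/eqP: Hu; rewrite mulf_eq0 (negPf dneq0') /= => /eqP ->.
by move/eqP: Hv; rewrite mulf_eq0 (negPf dneq0') /= => /eqP ->.
Qed.

Lemma thsurj c : exists x, th x == c.
Proof.
have [b [Hb E]] := phisurj (ut3_UT (al * c) (ga * c) 0).
exists (a12 b); apply/eqP.
move: E; rewrite (phiform Hb) => /ut3_inj [E1 E2 _].
rewrite XE in E1; rewrite YE in E2.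
have [] := @lin0 (th (a12 b) - c) (th (a23 b)).
- by rewrite -[RHS](subrr (al * c)) -{1}E1; ring.
- by rewrite -[RHS](subrr (ga * c)) -{1}E2; ring.
by move=> /eqP; rewrite subr_eq0 => /eqP.
Qed.

Definition thinv c := xchoose (thsurj c).
Lemma thinvK c : th (thinv c) = c. Proof. exact/eqP/(xchooseP (thsurj c)). Qed.
Lemma thK x : thinv (th x) = x. Proof. apply: thinj; exact: thinvK. Qed.

Definition theta : {rmorphism F -> F} := mkRM thB thM th1.

Definition fc a := thinv (a13 (phi a) / d) - a13 a.

Lemma centralE a : UT3 a -> central_map fc a = ut3 (a12 a) (a23 a) (thinv (a13 (phi a) / d)).
Proof.
move=> Ha; rewrite /central_map {1}(UT_ut3 Ha) ut3_t13 /fc; congr ut3; ring.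
Qed.

Lemma psiinj x y x' y' : X x y = X x' y' -> Y x y = Y x' y' -> x = x' /\ y = y'.
Proof.
rewrite !XE !YE => E1 E2.
have [] := @lin0 (th x - th x') (th y - th y').
- by rewrite -[RHS](subrr (al * th x' + be * th y')) -{1}E1; ring.
- by rewrite -[RHS](subrr (ga * th x' + de * th y')) -{1}E2; ring.
move=> H1 H2; split; apply: thinj; apply/eqP; by rewrite -subr_eq0 ?H1 ?H2.
Qed.

Lemma centralPC : PCmap (central_map fc).
Proof.
split.
- by move=> a Ha; rewrite centralE //; apply: ut3_UT.
- move=> a b Ha Hb; rewrite !centralE // => /ut3_inj [E1 E2 E3].
  apply: phiinj => //; rewrite (phiform Ha) (phiform Hb) E1 E2; congr ut3.
  have := congr1 th E3; rewrite !thinvK => E4.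
  by rewrite -(divfK dneq0 (a13 (phi a))) E4 divfK // dneq0.
- move=> y Hy.
  have [a [Ha E]] := phisurj (ut3_UT (X (a12 y) (a23 y)) (Y (a12 y) (a23 y)) (d * th (a13 y))).
  exists a; split => //.
  move: E; rewrite (phiform Ha) => /ut3_inj [E1 E2 E3].
  rewrite centralE //; have [-> ->] := psiinj E1 E2.
  rewrite E3.
  have -> : d * th (a13 y) / d = th (a13 y) by rewrite mulrC mulKf // dneq0.
  rewrite thK.
  by rewrite -UT_ut3.
- move=> a b Ha Hb.
  have Hc : UT3 (comm3 a b) by rewrite comm_gen //; apply: ut3_UT.
  rewrite (centralE Ha) (centralE Hb) ut3_comm centralE //.
  rewrite (comm_gen Ha Hb) !ut3_a12 !ut3_a23 phiC ut3_a13.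
  rewrite (_ : g (om a b) / d = th (om a b)) // thK.
  by rewrite /om.
Qed.

Lemma main_sec :
  exists (al be ga de : F) (theta : {rmorphism F -> F}) (f : 'M[F]_3 -> F),
    [/\ al * de - be * ga != 0,
        bijective theta,
        PCmap (central_map f) &
        forall a : 'M[F]_3, UT3 a ->
          phi a = permutable_map al be ga de (field_aut_map theta (central_map f a))].
Proof.
exists al, be, ga, de, theta, fc; split.
- exact: dneq0'.
- by exists thinv => x; rewrite mkRME ?thK ?thinvK.
- exact: centralPC.
- move=> a Ha; rewrite centralE // /field_aut_map ut3_map /permutable_map
    !ut3_a12 !ut3_a23 !ut3_a13 !mkRME thinvK.
  rewrite {1}(phiform Ha) !XE !YE; congr ut3.
  rewrite -dE mulrC divfK // dneq0 //.
Qed.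
End Main.

Theorem mainTheorem9 (F : fieldType) (hchar : (2%:R : F) != 0)
  (phi : 'M[F]_3 -> 'M[F]_3) (hphi : PCmap phi) :
  exists (al be ga de : F) (theta : {rmorphism F -> F}) (f : 'M[F]_3 -> F),
    [/\ al * de - be * ga != 0,
        bijective theta,
        PCmap (central_map f) &
        forall a : 'M[F]_3, UT3 a ->
          phi a = permutable_map al be ga de (field_aut_map theta (central_map f a))].
Proof. exact: main_sec. Qed.
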